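(* Consider problem (P) and suppose Assumptions A and B hold. Let $\{x^t\}$ be generated by SCP$_{ls}$ and let $\Omega_x$ be the set of accumulation points of $\{x^t\}$. Then (i) $\Omega_x\neq\emptyset$ and $F\equiv\bar F^*$ on $\Omega_x$; (ii) $\{F(x^t)\}$ is nonincreasing and converges to $\bar F^*$, where $\bar F^*:=\lim_{t\to\infty}\bar F(x^{t+1},x^t,L_g^t)$ (this limit exists and is finite).
   Context: Problem (P): $\min_{x\in\mathbb R^n}F(x):=f(x)+P_1(x)-P_2(x)+\delta_{\{g\le 0\}}(x)$, where $f:\mathbb R^n\to\mathbb R$ is continuously differentiable, $P_1,P_2:\mathbb R^n\to\mathbb R$ are convex and continuous, $g=(g_1,\dots,g_m):\mathbb R^n\to\mathbb R^m$ is continuous with $\{x:g(x)\le0\}\neq\emptyset$ (componentwise inequalities), $\delta_C$ the indicator function of $C$. Assumption A: (i) $\nabla f$ is Lipschitz with modulus $L_f$; (ii) each $g_i$ is differentiable with $\nabla g_i$ Lipschitz with modulus $L_{g_i}$; (iii) $F$ is level-bounded. Assumption B (MFCQ): each $g_i$ is continuously differentiable and for every $x$ with $g(x)\le0$ there is $d$ with $\langle\nabla g_i(x),d\rangle<0$ for all $i\in I(x):=\{j:g_j(x)=0\}$. $\bar G(x,y,w)\in\mathbb R^m$ has components $\bar G_i(x,y,w)=g_i(y)+\langle\nabla g_i(y),x-y\rangle+\frac{w_i}{2}\|x-y\|^2$, and $\bar F(x,y,w):=f(x)+P_1(x)-P_2(x)+\delta_{\{\bar G\le0\}}(x,y,w)$.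 Algorithm SCP$_{ls}$: fix $c>0$, $0<\underline L<\bar L$, $\tau>1$ and $x^0$ with $g(x^0)\le0$. For $t=0,1,2,\dots$: (1) pick any $\xi^t\in\partial P_2(x^t)$; (2) choose $L_f^{t,0}\in[\underline L,\bar L]$, $L_g^{t,0}\in[\underline L,\bar L]^m$ arbitrarily, set $\tilde L_f=L_f^{t,0}$, $\tilde L_g=L_g^{t,0}$; (3) compute $\tilde x$ solving: minimize $\langle\nabla f(x^t)-\xi^t,x-x^t\rangle+\frac{\tilde L_f}{2}\|x-x^t\|^2+P_1(x)$ subject to $\bar G(x,x^t,\tilde L_g)\le0$. If $g(\tilde x)\le0$ and $F(\tilde x)\le F(x^t)-\frac c2\|\tilde x-x^t\|^2$, set $x^{t+1}=\tilde x$, $L_f^t=\tilde L_f$, $L_g^t=\tilde L_g$ and go to iteration $t+1$; otherwise, if $g(\tilde x)\not\le0$ replace $\tilde L_g$ by $\tau\tilde L_g$, while if $g(\tilde x)\le0$ but the decrease inequality fails replace $\tilde L_f$ by $\tau\tilde L_f$, and repeat step (3). *)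

(* Defs.v *)
From mathcomp Require Import ssreflect ssrfun ssrbool eqtype ssrnat seq fintype bigop.
From Stdlib Require Import Reals.
Open Scope R_scope.

Definition vec (n : nat) := 'I_n -> R.

Definition vadd {n} (x y : vec n) : vec n := fun i => x i + y i.
Definition vsub {n} (x y : vec n) : vec n := fun i => x i - y i.

Definition inner {n} (x y : vec n) : R := \big[Rplus/0%R]_(i < n) (x i * y i).
Definition sqnorm {n} (x : vec n) : R := inner x x.
Definition norm {n} (x : vec n) : R := sqrt (sqnorm x).

(** Extended reals (only +oo is needed, for indicator functions). *)
Inductive ereal := Fin (r : R) | PInf.

Definition ele (a b : ereal) : Prop :=
  match a, b with
  | _, PInf => True
  | Fin x, Fin y => x <= y
  | PInf, Fin _ => False
  end.

Definition ecv (s : nat -> ereal) (l : R) : Prop :=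
  forall eps, 0 < eps -> exists N : nat, forall t : nat, le N t ->
    exists r, s t = Fin r /\ Rabs (r - l) < eps.

Definition has_gradient {n} (f : vec n -> R) (gf : vec n -> vec n) : Prop :=
  forall x eps, 0 < eps -> exists delta, 0 < delta /\
    forall h : vec n, norm h < delta ->
      Rabs (f (vadd x h) - f x - inner (gf x) h) <= eps * norm h.

Definition cont_vec {n} (G : vec n -> vec n) : Prop :=
  forall x eps, 0 < eps -> exists delta, 0 < delta /\
    forall y, norm (vsub y x) < delta -> norm (vsub (G y) (G x)) < eps.

Definition cont_real {n} (P : vec n -> R) : Prop :=
  forall x eps, 0 < eps -> exists delta, 0 < delta /\
    forall y, norm (vsub y x) < delta -> Rabs (P y - P x) < eps.

Definition lipschitz_vec {n} (G : vec n -> vec n) (L : R) : Prop :=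
  forall x y, norm (vsub (G x) (G y)) <= L * norm (vsub x y).

Definition convex_fun {n} (P : vec n -> R) : Prop :=
  forall (x y : vec n) (lam : R), 0 <= lam <= 1 ->
    P (fun i => lam * x i + (1 - lam) * y i) <= lam * P x + (1 - lam) * P y.

Definition subgrad {n} (P : vec n -> R) (x xi : vec n) : Prop :=
  forall y, P y >= P x + inner xi (vsub y x).

Definition feasible {n m} (g : 'I_m -> vec n -> R) (x : vec n) : Prop :=
  forall i, g i x <= 0.

Definition feasibleb {n m} (g : 'I_m -> vec n -> R) (x : vec n) : bool :=
  [forall i : 'I_m, if Rle_dec (g i x) 0 then true else false].

Definition Fval {n m} (f P1 P2 : vec n -> R) (g : 'I_m -> vec n -> R)
  (x : vec n) : ereal :=
  if feasibleb g x then Fin (f x + P1 x - P2 x) else PInf.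

Definition level_bounded {n m} (f P1 P2 : vec n -> R) (g : 'I_m -> vec n -> R) : Prop :=
  forall a : R, exists M : R, forall x,
    ele (Fval f P1 P2 g x) (Fin a) -> norm x <= M.

Definition MFCQ {n m} (g : 'I_m -> vec n -> R) (gg : 'I_m -> vec n -> vec n) : Prop :=
  forall x, feasible g x -> exists d : vec n,
    forall i, g i x = 0 -> inner (gg i x) d < 0.

Definition Gbar {n m} (g : 'I_m -> vec n -> R) (gg : 'I_m -> vec n -> vec n)
  (x y : vec n) (w : vec m) (i : 'I_m) : R :=
  g i y + inner (gg i y) (vsub x y) + w i / 2 * sqnorm (vsub x y).

Definition Fbar {n m} (f P1 P2 : vec n -> R) (g : 'I_m -> vec n -> R)
  (gg : 'I_m -> vec n -> vec n) (x y : vec n) (w : vec m) : ereal :=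
  if [forall i : 'I_m, if Rle_dec (Gbar g gg x y w i) 0 then true else false]
  then Fin (f x + P1 x - P2 x) else PInf.

Definition sub_obj {n} (gf : vec n -> vec n) (P1 : vec n -> R)
  (xt xi : vec n) (Lf : R) (x : vec n) : R :=
  inner (vsub (gf xt) xi) (vsub x xt) + Lf / 2 * sqnorm (vsub x xt) + P1 x.

Definition solves_sub {n m} (gf : vec n -> vec n) (P1 : vec n -> R)
  (g : 'I_m -> vec n -> R) (gg : 'I_m -> vec n -> vec n)
  (xt xi : vec n) (Lf : R) (Lg : vec m) (z : vec n) : Prop :=
  (forall i, Gbar g gg z xt Lg i <= 0) /\
  forall x, (forall i, Gbar g gg x xt Lg i <= 0) ->
    sub_obj gf P1 xt xi Lf z <= sub_obj gf P1 xt xi Lf x.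

(** One outer iteration of SCP_ls: from xt, the line search (inner loop with
    trial parameters Lfs k, Lgs k and trial points xs k, k = 0..K) terminates
    at k = K, producing x_{t+1} = xnext with accepted parameters LfA, LgA. *)
Definition scp_iter {n m} (f : vec n -> R) (gf : vec n -> vec n) (P1 P2 : vec n -> R)
  (g : 'I_m -> vec n -> R) (gg : 'I_m -> vec n -> vec n)
  (c Lmin Lmax tau : R) (xt xnext : vec n) (LfA : R) (LgA : vec m) : Prop :=
  let Fo := fun z => f z + P1 z - P2 z in
  let accept := fun z => feasible g z /\ Fo z <= Fo xt - c / 2 * sqnorm (vsub z xt) in
  exists (xi : vec n) (K : nat) (Lfs : nat -> R) (Lgs : nat -> vec m) (xs : nat -> vec n),
    subgrad P2 xt xi /\
    Lmin <= Lfs 0%nat <= Lmax /\ (forall i, Lmin <= Lgs 0%nat i <= Lmax) /\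
    (forall k : nat, le k K -> solves_sub gf P1 g gg xt xi (Lfs k) (Lgs k) (xs k)) /\
    (forall k : nat, lt k K ->
       ~ accept (xs k) /\
       (~ feasible g (xs k) ->
          Lgs (S k) = (fun i => tau * Lgs k i) /\ Lfs (S k) = Lfs k) /\
       (feasible g (xs k) ->
          Lfs (S k) = tau * Lfs k /\ Lgs (S k) = Lgs k)) /\
    accept (xs K) /\ xnext = xs K /\ LfA = Lfs K /\ LgA = Lgs K.

Definition accum_point {n} (x : nat -> vec n) (z : vec n) : Prop :=
  forall eps, 0 < eps -> forall N : nat, exists t : nat, le N t /\ norm (vsub (x t) z) < eps.

(* Main.v *)
Require Import Defs.
From HB Require Import structures.
From mathcomp Require Import ssreflect ssrfun ssrbool eqtype ssrnat seq fintype bigop.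
From Stdlib Require Import Reals Rtopology Lra Lia FunctionalExtensionality IndefiniteDescription.
Open Scope R_scope.
From Stdlib Require Import Classical.

HB.instance Definition _ := Monoid.isComLaw.Build R 0 Rplus (fun a b c => esym (Rplus_assoc a b c)) Rplus_comm Rplus_0_l.

Lemma sum_ge0 n (F : 'I_n -> R) : (forall i, 0 <= F i) -> 0 <= \big[Rplus/0]_(i < n) F i.
Proof. move=> H; apply: (big_ind (fun x => 0 <= x)) => //; [lra | move=> a b ? ?; lra]. Qed.

Lemma sqnorm_ge0 n (v : vec n) : 0 <= sqnorm v.
Proof. apply: sum_ge0 => i; nra. Qed.

Lemma coord_le_norm n (v : vec n) i : Rabs (v i) <= norm v.
Proof.
rewrite /norm /sqnorm /inner (bigD1 i) //=.
rewrite -sqrt_Rsqr_abs; apply: sqrt_le_1_alt.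
rewrite /Rsqr -{1}(Rplus_0_r (v i * v i)); apply: Rplus_le_compat_l.
apply: (big_ind (fun x => 0 <= x)) => //; [lra | move=> a b ? ?; lra | move=> j _; nra].
Qed.

Lemma sum_le_const n (F : 'I_n -> R) c : (forall i, F i <= c) ->
  \big[Rplus/0]_(i < n) F i <= INR n * c.
Proof.
elim: n F => [|n IH] F H; first by rewrite big_ord0 /=; lra.
rewrite S_INR big_ord_recr.
have := IH (fun i => F (widen_ord (leqnSn n) i)) (fun i => H _).
have := H ord_max. rewrite /=. lra.
Qed.

Lemma norm_small n (eps : R) : 0 < eps -> exists e, 0 < e /\
  forall v : vec n, (forall i, Rabs (v i) < e) -> norm v < eps.
Proof.
move=> He. have Hn := pos_INR n.
exists (eps / (INR n + 1)); split; first by apply: Rdiv_lt_0_compat; lra.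
move=> v Hv.
have Hs : sqnorm v <= INR n * (eps / (INR n + 1))^2.
  apply: sum_le_const => i. have := Hv i. have := Rabs_pos (v i).
  move=> h1 h2.
  have E : v i * v i = Rabs (v i) * Rabs (v i).
    rewrite -Rabs_mult Rabs_right //; apply: Rle_ge; nra.
  rewrite E; nra.
rewrite /norm -(sqrt_pow2 eps); last lra.
apply: sqrt_lt_1_alt; split; first exact: sqnorm_ge0.
apply: (Rle_lt_trans _ _ _ Hs).
set e := eps / (INR n + 1).
have He' : eps = e * (INR n + 1) by rewrite /e; field; lra.
rewrite He'. have : 0 < e by rewrite /e; apply: Rdiv_lt_0_compat; lra. nra.
Qed.

Lemma inner_bound n (a h : vec n) :
  Rabs (inner a h) <= (\big[Rplus/0]_(i < n) Rabs (a i)) * norm h.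
Proof.
have E : (\big[Rplus/0]_(i < n) Rabs (a i)) * norm h = \big[Rplus/0]_(i < n) (Rabs (a i) * norm h).
  apply: (big_ind2 (fun x y => x * norm h = y)) => //; [lra | move=> p q r s <- <-; lra].
rewrite E /inner.
apply: (big_ind2 (fun x y => Rabs x <= y)).
- rewrite Rabs_R0; lra.
- move=> p q r s h1 h2. apply: (Rle_trans _ _ _ (Rabs_triang _ _)); lra.
- move=> i _. rewrite Rabs_mult. apply: Rmult_le_compat_l; first exact: Rabs_pos.
  exact: coord_le_norm.
Qed.

Lemma vadd_vsub n (y z : vec n) : vadd z (vsub y z) = y.
Proof. apply: functional_extensionality => i; rewrite /vadd /vsub; lra. Qed.

Lemma f_cont n (f : vec n -> R) gf : has_gradient f gf -> cont_real f.
Proof.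
move=> Hf z eps He.
set A := \big[Rplus/0]_(i < n) Rabs (gf z i).
have HA : 0 <= A by apply: sum_ge0 => i; apply: Rabs_pos.
have [d [Hd Hd']] := Hf z 1 Rlt_0_1.
exists (Rmin d (eps / (A + 2))); split.
  apply: Rmin_pos => //; apply: Rdiv_lt_0_compat; lra.
move=> y Hy.
have Hy1 : norm (vsub y z) < d by apply: (Rlt_le_trans _ _ _ Hy); apply: Rmin_l.
have Hy2 : norm (vsub y z) < eps / (A + 2) by apply: (Rlt_le_trans _ _ _ Hy); apply: Rmin_r.
have := Hd' _ Hy1. rewrite vadd_vsub => H1.
have H2 := @inner_bound n (gf z) (vsub y z). rewrite -/A in H2.
have Hn : 0 <= norm (vsub y z) by apply: sqrt_pos.
have H3 : (A + 2) * norm (vsub y z) < eps.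
  have -> : eps = (A + 2) * (eps / (A + 2)) by field; lra.
  apply: Rmult_lt_compat_l => //; lra.
set N := norm (vsub y z) in H1 H2 H3 Hn.
set I := inner (gf z) (vsub y z) in H1 H2.
have := Rabs_triang (f y - f z - I) I.
have -> : f y - f z - I + I = f y - f z by ring.
have : (A+2)*N = A*N + 2*N by ring.
have : 1 * N = N by ring.
lra.
Qed.

Lemma Fo_cont n (f : vec n -> R) gf P1 P2 : has_gradient f gf -> cont_real P1 -> cont_real P2 ->
  cont_real (fun z => f z + P1 z - P2 z).
Proof.
move=> Hf H1 H2 z eps He.
have [d0 [Hd0 Hd0']] := @f_cont n f gf Hf z (eps/3) ltac:(lra).
have [d1 [Hd1 Hd1']] := H1 z (eps/3) ltac:(lra).
have [d2 [Hd2 Hd2']] := H2 z (eps/3) ltac:(lra).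
exists (Rmin d0 (Rmin d1 d2)); split.
  by apply: Rmin_pos => //; apply: Rmin_pos.
move=> y Hy.
have h0 : norm (vsub y z) < d0 by apply: (Rlt_le_trans _ _ _ Hy); apply: Rmin_l.
have h1 : norm (vsub y z) < d1.
  apply: (Rlt_le_trans _ _ _ Hy); apply: (Rle_trans _ _ _ (Rmin_r _ _)); apply: Rmin_l.
have h2 : norm (vsub y z) < d2.
  apply: (Rlt_le_trans _ _ _ Hy); apply: (Rle_trans _ _ _ (Rmin_r _ _)); apply: Rmin_r.
have := Hd0' _ h0; have := Hd1' _ h1; have := Hd2' _ h2.
move=> a b c.
apply: Rabs_def1.
- have := Rabs_def2 _ _ a; have := Rabs_def2 _ _ b; have := Rabs_def2 _ _ c. lra.
- have := Rabs_def2 _ _ a; have := Rabs_def2 _ _ b; have := Rabs_def2 _ _ c. lra.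
Qed.

Definition incr (phi : nat -> nat) := forall k, (phi k < phi (S k))%coq_nat.

Lemma incr_lt phi : incr phi -> forall a b, (a < b)%coq_nat -> (phi a < phi b)%coq_nat.
Proof.
move=> H a b Hab. induction b as [|b IH]; first lia.
have := H b. destruct (Nat.eq_dec a b) as [->|ne]; first lia.
have := IH ltac:(lia). lia.
Qed.

Lemma incr_ge phi : incr phi -> forall k, (k <= phi k)%coq_nat.
Proof. move=> H; elim=> [|k IH]; [lia | have := H k; lia]. Qed.

Lemma extract (v : nat -> R) l :
  (forall eps, 0 < eps -> forall N, exists p, (N <= p)%coq_nat /\ Rabs (v p - l) < eps) ->
  exists psi, incr psi /\ forall eps, 0 < eps -> exists K, forall k, (K <= k)%coq_nat ->
    Rabs (v (psi k) - l) < eps.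
Proof.
move=> H.
have ch : forall N k : nat, {p | (N <= p)%coq_nat /\ Rabs (v p - l) < / (INR k + 1)}.
  move=> N k; apply: constructive_indefinite_description; apply: H.
  apply: Rinv_0_lt_compat; have := pos_INR k; lra.
pose psi := fix psi k := match k with
  | O => proj1_sig (ch O O) | S k' => proj1_sig (ch (S (psi k')) k) end.
have Hp : forall k, Rabs (v (psi k) - l) < / (INR k + 1).
  by case=> [|k] /=; case: (ch _ _) => p [].
exists psi; split.
  by move=> k /=; case: (ch _ _) => p [] /=; lia.
move=> eps He. have [N [HN HN0]] := archimed_cor1 eps He.
exists N => k Hk. apply: (Rlt_trans _ _ _ (Hp k)).
apply: (Rle_lt_trans _ _ _ _ HN).
apply: Rinv_le_contravar; first by apply: lt_0_INR.
have := le_INR _ _ Hk; lra.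
Qed.

Lemma BW_Rn n (x : nat -> vec n) M : (forall t i, Rabs (x t i) <= M) ->
  exists phi z, incr phi /\ forall eps, 0 < eps -> exists K, forall k, (K <= k)%coq_nat ->
    norm (vsub (x (phi k)) z) < eps.
Proof.
move=> HM.
have key : forall k, (k <= n)%coq_nat -> exists phi (z : vec n), incr phi /\
  forall eps, 0 < eps -> exists K, forall t, (K <= t)%coq_nat -> forall i : 'I_n,
    (nat_of_ord i < k)%coq_nat -> Rabs (x (phi t) i - z i) < eps.
  elim=> [|k IH] Hk.
    exists (fun t : nat => t), (fun _ => 0); split; [move=> k /=; lia | move=> eps He; exists O => t _ i Hi; lia].
  have [phi [z [Hphi Hz]]] := IH ltac:(lia).
  have Hkn : (k < n)%nat by apply/ltP; lia.
  pose ik := Ordinal Hkn.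
  have [l Hl] := Bolzano_Weierstrass (fun t => x (phi t) ik) (fun c => -M <= c <= M)
     (compact_P3 _ _) (fun t => ltac:(have := HM (phi t) ik; move=> hh; have := Rle_abs (x (phi t) ik); have := Rle_abs (- x (phi t) ik); rewrite Rabs_Ropp; lra)).
  have Hl' : forall eps, 0 < eps -> forall N, exists p, (N <= p)%coq_nat /\ Rabs (x (phi p) ik - l) < eps.
    move=> eps He N.
    have [p [Hp Hp']] := Hl (disc l (mkposreal eps He)) N ltac:(exists (mkposreal eps He); by move=> y).
    by exists p.
  have [psi [Hpsi Hconv]] := @extract _ _ Hl'.
  exists (fun t => phi (psi t)), (fun j => if j == ik then l else z j); split.
    move=> t; apply: incr_lt => //; exact: Hpsi.
  move=> eps He.
  have [K1 HK1] := Hconv eps He.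
  have [K2 HK2] := Hz eps He.
  exists (Nat.max K1 K2) => t Ht i Hi.
  case: (eqVneq i ik) => [->|ne].
    rewrite ?eqxx /=. apply: HK1. lia.
  rewrite ?(negbTE ne).
  have Hik : (nat_of_ord i < k)%coq_nat.
    have : nat_of_ord i <> k by move=> E; move/eqP: ne; apply; apply: ord_inj.
    lia.
  apply: HK2 => //. have := @incr_ge _ Hpsi t. lia.
have [phi [z [Hphi Hz]]] := key n (le_n n).
exists phi, z; split => // eps He.
have [e [He' He'']] := @norm_small n eps He.
have [K HK] := Hz e He'.
exists K => t Ht. apply: He'' => i. apply: HK => //. apply/ltP; exact: ltn_ord.
Qed.

Lemma feasibleb_true n m (g : 'I_m -> vec n -> R) y : feasible g y -> feasibleb g y = true.
Proof. move=> H; apply/forallP => i; case: Rle_dec => // ?; have := H i; lra. Qed.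

Lemma Fval_feas n m f P1 P2 (g : 'I_m -> vec n -> R) y : feasible g y ->
  Fval f P1 P2 g y = Fin (f y + P1 y - P2 y).
Proof. by move=> H; rewrite /Fval feasibleb_true. Qed.

Lemma Fbar_feas n m f P1 P2 (g : 'I_m -> vec n -> R) gg y xt w :
  (forall i, Gbar g gg y xt w i <= 0) ->
  Fbar f P1 P2 g gg y xt w = Fin (f y + P1 y - P2 y).
Proof.
move=> H; rewrite /Fbar.
have -> : [forall i, if Rle_dec (Gbar g gg y xt w i) 0 then true else false] = true.
  apply/forallP => i; case: Rle_dec => // ?; have := H i; lra.
by [].
Qed.

Theorem mainTheorem8 (n m : nat)
  (f : vec n -> R) (gf : vec n -> vec n) (P1 P2 : vec n -> R)
  (g : 'I_m -> vec n -> R) (gg : 'I_m -> vec n -> vec n)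
  (Lf : R) (Lgi : 'I_m -> R)
  (c Lmin Lmax tau : R)
  (x : nat -> vec n) (LfS : nat -> R) (LgS : nat -> vec m)
  (* problem data *)
  (Hf : has_gradient f gf) (Hgfc : cont_vec gf)
  (HP1 : convex_fun P1) (HP1c : cont_real P1)
  (HP2 : convex_fun P2) (HP2c : cont_real P2)
  (Hgc : forall i, cont_real (g i))
  (Hne : exists x0, feasible g x0)
  (* Assumption A *)
  (HA1 : lipschitz_vec gf Lf)
  (HA2 : forall i, has_gradient (g i) (gg i) /\ lipschitz_vec (gg i) (Lgi i))
  (HA3 : level_bounded f P1 P2 g)
  (* Assumption B *)
  (HB1 : forall i, cont_vec (gg i))
  (HB2 : MFCQ g gg)
  (* algorithm parameters *)
  (Hc : 0 < c) (HL : 0 < Lmin < Lmax) (Htau : 1 < tau)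
  (* the sequence generated by SCP_ls *)
  (Hx0 : feasible g (x 0%nat))
  (Hiter : forall t : nat,
     scp_iter f gf P1 P2 g gg c Lmin Lmax tau (x t) (x (S t)) (LfS t) (LgS t)) :
  exists Fstar : R,
    ecv (fun t => Fbar f P1 P2 g gg (x (S t)) (x t) (LgS t)) Fstar /\
    (* (i) *)
    (exists z, accum_point x z) /\
    (forall z, accum_point x z -> Fval f P1 P2 g z = Fin Fstar) /\
    (* (ii) *)
    (forall t : nat, ele (Fval f P1 P2 g (x (S t))) (Fval f P1 P2 g (x t))) /\
    ecv (fun t => Fval f P1 P2 g (x t)) Fstar.
Proof.
pose Fo := fun z => f z + P1 z - P2 z.
have step : forall t, feasible g (x (S t)) /\ Fo (x (S t)) <= Fo (x t) /\
    (forall i, Gbar g gg (x (S t)) (x t) (LgS t) i <= 0).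
  move=> t.
  have [xi [K [Lfs [Lgs [xs [_ [_ [_ [Hsol [_ [[Hfe Hdec] [Ex [_ ELg]]]]]]]]]]]]] := Hiter t.
  have Hsq := @sqnorm_ge0 n (vsub (xs K) (x t)).
  rewrite Ex ELg; split => //; split; first by rewrite /Fo; nra.
  exact: (Hsol K (le_n K)).1.
have feas : forall t, feasible g (x t).
  by elim=> [|t _] //; case: (step t).
have mono : forall s t, (s <= t)%coq_nat -> Fo (x t) <= Fo (x s).
  move=> s t Hst; induction Hst; first lra.
  have [_ [h _]] := step m0. lra.
have [M HM] := HA3 (Fo (x 0%nat)).
have Hb : forall t i, Rabs (x t i) <= M.
  move=> t i; apply: (Rle_trans _ _ _ (coord_le_norm _ _ _)); apply: HM.
  rewrite Fval_feas //=. apply: mono; lia.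
have [phi [z [Hphi Hconv]]] := @BW_Rn n x M Hb.
have HFc := @Fo_cont n f gf P1 P2 Hf HP1c HP2c.
have HA : forall t, Fo z <= Fo (x t).
  move=> t; apply: Rnot_lt_le => Hlt.
  have [d [Hd Hd']] := HFc z (Fo z - Fo (x t)) ltac:(lra).
  have [K HK] := Hconv d Hd.
  have Hk := HK (Nat.max K t) ltac:(lia).
  have := Hd' _ Hk. have := mono t (phi (Nat.max K t)) ltac:(have := @incr_ge _ Hphi (Nat.max K t); lia).
  rewrite /Fo => h1 h2. have := Rabs_def2 _ _ h2. lra.
have HB : forall eps, 0 < eps -> exists N, forall t, (N <= t)%coq_nat -> Rabs (Fo (x t) - Fo z) < eps.
  move=> eps He.
  have [d [Hd Hd']] := HFc z eps He.
  have [K HK] := Hconv d Hd.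
  exists (phi K) => t Ht.
  have := Hd' _ (HK K (le_n K)). have := mono _ _ Ht. have := HA t.
  rewrite /Fo => h1 h2 h3. have := Rabs_def2 _ _ h3.
  move=> [h4 h5]. apply: Rabs_def1; lra.
exists (Fo z); split; [|split; [|split; [|split]]].
- move=> eps He. have [N HN] := HB eps He. exists N => t Ht.
  exists (Fo (x (S t))); split; first by rewrite Fbar_feas //; case: (step t) => _ [].
  apply: HN; lia.
- exists z => eps He N.
  have [K HK] := Hconv eps He.
  exists (phi (Nat.max K N)); split; first by have := @incr_ge _ Hphi (Nat.max K N); lia.
  apply: HK; lia.
- move=> w Hw.
  have Hfw : feasible g w.
    move=> i; apply: Rnot_lt_le => Hlt.
    have [d [Hd Hd']] := Hgc i w (g i w) Hlt.
    have [t [_ Ht]] := Hw d Hd O.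
    have := Hd' _ Ht. have := feas t i. move=> h1 h2. have := Rabs_def2 _ _ h2. lra.
  rewrite Fval_feas //. congr Fin.
  apply: NNPP => Hne'.
  have Hpos : 0 < Rabs (Fo w - Fo z).
    apply: Rabs_pos_lt => E; apply: Hne'; rewrite /Fo in E *; lra.
  set e := Rabs (Fo w - Fo z) in Hpos.
  have [d [Hd Hd']] := HFc w (e/2) ltac:(lra).
  have [N HN] := HB (e/2) ltac:(lra).
  have [t [Ht Ht']] := Hw d Hd N.
  have h1 := Hd' _ Ht'. have h2 := HN t Ht.
  have := Rabs_triang (Fo (x t) - Fo z) (- (Fo (x t) - Fo w)).
  rewrite Rabs_Ropp.
  have -> : Fo (x t) - Fo z + - (Fo (x t) - Fo w) = Fo w - Fo z by ring.
  rewrite -/e. rewrite /Fo in h1 h2 *. lra.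
- move=> t. rewrite (@Fval_feas _ _ f P1 P2 g _ (feas t)) (@Fval_feas _ _ f P1 P2 g _ (feas t.+1)) /=.
  by case: (step t) => _ [].
- move=> eps He. have [N HN] := HB eps He. exists N => t Ht.
  exists (Fo (x t)); split; first by rewrite Fval_feas.
  exact: HN.
Qed.
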